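(* Let $\mathcal{M}$ be a model category and $X,Y$ objects of $\mathcal{M}$. The inclusion of the full subcategory $(\mathrm{WCofib})^{-1}\mathcal{M}(\mathrm{WFib})^{-1}(X,Y)$ into $\mathcal{M}(X,Y)_{\mathrm{Hom}}$ is a homotopy equivalence of categories.
   Context: $\mathcal{M}(X,Y)_{\mathrm{Hom}}$ is the category whose objects are zig-zags $X \xleftarrow{\sim} U \to V \xleftarrow{\sim} Y$ in $\mathcal{M}$ (arrows marked $\sim$ are weak equivalences), a morphism $[X\leftarrow U\to V\leftarrow Y]\to[X\leftarrow U'\to V'\leftarrow Y]$ being a pair of weak equivalences $U\to U'$, $V\to V'$ making the evident diagram (identities on $X$, $Y$) commute. $(\mathrm{WCofib})^{-1}\mathcal{M}(\mathrm{WFib})^{-1}(X,Y)$ is the full subcategory on those zig-zags in which $U\to X$ is a trivial fibration and $Y\to V$ is a trivial cofibration. A functor $F\colon\mathcal{C}\to\mathcal{D}$ is a homotopy equivalence if there is a functor $G\colon\mathcal{D}\to\mathcal{C}$ together with zig-zags of natural transformations connecting $F\circ G$ with $\mathrm{id}_{\mathcal{D}}$ and $G\circ F$ with $\mathrm{id}_{\mathcal{C}}$. *)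

(* Defs.v *)
From Stdlib Require Import ProofIrrelevance.

Set Implicit Arguments.
Unset Strict Implicit.

Record Category := {
  ob :> Type;
  hom : ob -> ob -> Type;
  idm : forall A, hom A A;
  comp : forall A B C, hom B C -> hom A B -> hom A C;
  comp_assoc : forall A B C D (h : hom C D) (g : hom B C) (f : hom A B),
      comp h (comp g f) = comp (comp h g) f;
  comp_id_l : forall A B (f : hom A B), comp (idm B) f = f;
  comp_id_r : forall A B (f : hom A B), comp f (idm A) = f
}.
Arguments hom {c} _ _.
Arguments idm {c} _.
Arguments comp {c A B C} _ _.

Record Functor (C D : Category) := {
  fobj :> C -> D;
  fmap : forall A B, hom A B -> hom (fobj A) (fobj B);
  fmap_id : forall A, fmap (idm A) = idm (fobj A);
  fmap_comp : forall A B E (g : hom B E) (f : hom A B),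
      fmap (comp g f) = comp (fmap g) (fmap f)
}.
Arguments fmap {C D} _ {A B} _.

Definition id_functor (C : Category) : Functor C C.
Proof.
  refine {| fobj := fun A => A; fmap := fun A B f => f |}; reflexivity.
Defined.

Definition comp_functor (C D E : Category) (G : Functor D E) (F : Functor C D)
  : Functor C E.
Proof.
  refine {| fobj := fun A => G (F A); fmap := fun A B f => fmap G (fmap F f) |}.
  - intros A; rewrite !fmap_id; reflexivity.
  - intros A B E' g f; rewrite !fmap_comp; reflexivity.
Defined.

Record NatTrans (C D : Category) (F G : Functor C D) := {
  component : forall A, hom (F A) (G A);
  naturality : forall A B (f : hom A B),
      comp (component B) (fmap F f) = comp (fmap G f) (component A)
}.

Inductive nat_zigzag (C D : Category) : Functor C D -> Functor C D -> Prop :=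
| nzz_refl : forall H, nat_zigzag H H
| nzz_fwd : forall H1 H2 H3, NatTrans H1 H2 -> nat_zigzag H2 H3 -> nat_zigzag H1 H3
| nzz_bwd : forall H1 H2 H3, NatTrans H2 H1 -> nat_zigzag H2 H3 -> nat_zigzag H1 H3.

Definition homotopy_equivalence (C D : Category) (F : Functor C D) : Prop :=
  exists G : Functor D C,
    nat_zigzag (comp_functor F G) (id_functor D) /\
    nat_zigzag (comp_functor G F) (id_functor C).

Definition FullSub (C : Category) (P : C -> Prop) : Category.
Proof.
  refine {| ob := {c : C | P c};
            hom := fun a b => hom (proj1_sig a) (proj1_sig b);
            idm := fun a => idm (proj1_sig a);
            comp := fun a b c g f => comp g f |}.
  - intros; apply comp_assoc.
  - intros; apply comp_id_l.
  - intros; apply comp_id_r.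
Defined.

Definition incl (C : Category) (P : C -> Prop) : Functor (FullSub P) C.
Proof.
  refine {| fobj := fun a : FullSub P => proj1_sig a;
            fmap := fun a b f => f |}; reflexivity.
Defined.

Section ModelDefs.
Variable C : Category.
Definition MorClass := forall A B : C, hom A B -> Prop.

Definition is_terminal (T : C) : Prop := forall A : C, exists! f : hom A T, True.
Definition is_initial (I : C) : Prop := forall A : C, exists! f : hom I A, True.

Definition has_pullbacks : Prop :=
  forall (A B Z : C) (f : hom A Z) (g : hom B Z),
  exists (P : C) (p1 : hom P A) (p2 : hom P B),
    comp f p1 = comp g p2 /\
    forall (Q : C) (q1 : hom Q A) (q2 : hom Q B), comp f q1 = comp g q2 ->
      exists! u : hom Q P, comp p1 u = q1 /\ comp p2 u = q2.

Definition has_pushouts : Prop :=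
  forall (Z A B : C) (f : hom Z A) (g : hom Z B),
  exists (P : C) (i1 : hom A P) (i2 : hom B P),
    comp i1 f = comp i2 g /\
    forall (Q : C) (q1 : hom A Q) (q2 : hom B Q), comp q1 f = comp q2 g ->
      exists! u : hom P Q, comp u i1 = q1 /\ comp u i2 = q2.

Definition is_retract (A B A' B' : C) (f : hom A B) (g : hom A' B') : Prop :=
  exists (i : hom A A') (r : hom A' A) (j : hom B B') (s : hom B' B),
    comp r i = idm A /\ comp s j = idm B /\
    comp g i = comp j f /\ comp f r = comp s g.

Definition retract_closed (K : MorClass) : Prop :=
  forall (A B A' B' : C) (f : hom A B) (g : hom A' B'),
    is_retract f g -> K _ _ g -> K _ _ f.

Definition subcat_class (K : MorClass) : Prop :=
  (forall A : C, K A A (idm A)) /\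
  (forall (A B E : C) (f : hom A B) (g : hom B E), K _ _ f -> K _ _ g -> K _ _ (comp g f)).

Definition llp (A B E F : C) (i : hom A B) (p : hom E F) : Prop :=
  forall (u : hom A E) (v : hom B F), comp p u = comp v i ->
    exists h : hom B E, comp h i = u /\ comp p h = v.

Definition cap (K L : MorClass) : MorClass := fun A B f => K A B f /\ L A B f.

Record FunctorialFactorization (L R : MorClass) := {
  ff_ob : forall A B : C, hom A B -> C;
  ff_l : forall A B (f : hom A B), hom A (ff_ob f);
  ff_r : forall A B (f : hom A B), hom (ff_ob f) B;
  ff_fact : forall A B (f : hom A B), comp (ff_r f) (ff_l f) = f;
  ff_L : forall A B (f : hom A B), L _ _ (ff_l f);
  ff_R : forall A B (f : hom A B), R _ _ (ff_r f);
  ff_map : forall A B A' B' (f : hom A B) (f' : hom A' B')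
             (u : hom A A') (v : hom B B'), comp f' u = comp v f ->
             hom (ff_ob f) (ff_ob f');
  ff_map_l : forall A B A' B' (f : hom A B) (f' : hom A' B') u v
               (H : comp f' u = comp v f),
      comp (ff_map H) (ff_l f) = comp (ff_l f') u;
  ff_map_r : forall A B A' B' (f : hom A B) (f' : hom A' B') u v
               (H : comp f' u = comp v f),
      comp (ff_r f') (ff_map H) = comp v (ff_r f);
  ff_map_id : forall A B (f : hom A B) (H : comp f (idm A) = comp (idm B) f),
      ff_map H = idm (ff_ob f);
  ff_map_comp : forall A B A' B' A'' B'' (f : hom A B) (f' : hom A' B')
      (f'' : hom A'' B'') u v u' v'
      (H1 : comp f' u = comp v f) (H2 : comp f'' u' = comp v' f')
      (H12 : comp f'' (comp u' u) = comp (comp v' v) f),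
      ff_map H12 = comp (ff_map H2) (ff_map H1)
}.
End ModelDefs.

(** A model category (in the sense of Hovey): a category with finite limits and
    colimits, three classes of maps (weak equivalences, fibrations,
    cofibrations) which are subcategories, 2-out-of-3, retract axiom, lifting
    axioms and functorial factorizations. *)
Record ModelCategory := {
  mc_cat :> Category;
  weq : MorClass mc_cat;
  fib : MorClass mc_cat;
  cof : MorClass mc_cat;
  mc_terminal : exists T : mc_cat, is_terminal T;
  mc_initial : exists I : mc_cat, is_initial I;
  mc_pullbacks : has_pullbacks mc_cat;
  mc_pushouts : has_pushouts mc_cat;
  weq_subcat : subcat_class weq;
  fib_subcat : subcat_class fib;
  cof_subcat : subcat_class cof;
  two_of_three : forall (A B E : mc_cat) (f : hom A B) (g : hom B E),
      (weq f -> weq g -> weq (comp g f)) /\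
      (weq f -> weq (comp g f) -> weq g) /\
      (weq g -> weq (comp g f) -> weq f);
  weq_retract : retract_closed weq;
  fib_retract : retract_closed fib;
  cof_retract : retract_closed cof;
  lift_cof_trivfib : forall (A B E F : mc_cat) (i : hom A B) (p : hom E F),
      cof i -> fib p -> weq p -> llp i p;
  lift_trivcof_fib : forall (A B E F : mc_cat) (i : hom A B) (p : hom E F),
      cof i -> weq i -> fib p -> llp i p;
  fact_cof_trivfib : FunctorialFactorization cof (cap fib weq);
  fact_trivcof_fib : FunctorialFactorization (cap cof weq) fib
}.
Arguments weq {m A B} _.
Arguments fib {m A B} _.
Arguments cof {m A B} _.

(** * The category M(X,Y)_Hom of zig-zags X <~ U -> V ~> Y *)
Section ZigZag.
Variables (M : ModelCategory) (X Y : M).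

Record ZZ := {
  zU : M; zV : M;
  zw : hom zU X;
  zf : hom zU zV;
  zg : hom Y zV;
  zw_weq : weq zw;
  zg_weq : weq zg
}.

Record ZZhom (z z' : ZZ) := {
  za : hom (zU z) (zU z');
  zb : hom (zV z) (zV z');
  za_weq : weq za;
  zb_weq : weq zb;
  zh_w : comp (zw z') za = zw z;
  zh_f : comp (zf z') za = comp zb (zf z);
  zh_g : comp zb (zg z) = zg z'
}.

Lemma ZZhom_eq (z z' : ZZ) (h h' : ZZhom z z') :
  za h = za h' -> zb h = zb h' -> h = h'.
Proof.
  destruct h, h'; simpl; intros; subst; f_equal; apply proof_irrelevance.
Qed.

Definition ZZid (z : ZZ) : ZZhom z z.
Proof.
  refine {| za := idm (zU z); zb := idm (zV z) |}.
  - apply (proj1 (weq_subcat M)).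
  - apply (proj1 (weq_subcat M)).
  - apply comp_id_r.
  - rewrite comp_id_r, comp_id_l; reflexivity.
  - apply comp_id_l.
Defined.

Definition ZZcomp (z1 z2 z3 : ZZ) (k : ZZhom z2 z3) (h : ZZhom z1 z2) : ZZhom z1 z3.
Proof.
  refine {| za := comp (za k) (za h); zb := comp (zb k) (zb h) |}.
  - apply (proj2 (weq_subcat M)); [apply za_weq | apply za_weq].
  - apply (proj2 (weq_subcat M)); [apply zb_weq | apply zb_weq].
  - rewrite comp_assoc, (zh_w k); apply zh_w.
  - rewrite comp_assoc, (zh_f k), <- comp_assoc, (zh_f h), comp_assoc; reflexivity.
  - rewrite <- comp_assoc, (zh_g h); apply zh_g.
Defined.

Definition ZZcat : Category.
Proof.
  refine {| ob := ZZ; hom := ZZhom; idm := ZZid; comp := ZZcomp |}.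
  - intros; apply ZZhom_eq; simpl; apply comp_assoc.
  - intros; apply ZZhom_eq; simpl; apply comp_id_l.
  - intros; apply ZZhom_eq; simpl; apply comp_id_r.
Defined.

(** Objects of (WCofib)^{-1} M (WFib)^{-1}(X,Y): U -> X a trivial fibration,
    Y -> V a trivial cofibration. *)
Definition ZZ_WW (z : ZZcat) : Prop :=
  (fib (zw z) /\ weq (zw z)) /\ (cof (zg z) /\ weq (zg z)).

End ZigZag.

(* Main.v *)
Require Import Defs.
From Stdlib Require Import ClassicalEpsilon ProofIrrelevance.
Set Implicit Arguments.
Unset Strict Implicit.

Section S.
Variable M : ModelCategory.

Lemma w23a {A B E : M} (f : hom A B) (g : hom B E) : weq f -> weq g -> weq (comp g f).
Proof. apply (two_of_three f g). Qed.
Lemma w23b {A B E : M} (f : hom A B) (g : hom B E) : weq f -> weq (comp g f) -> weq g.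
Proof. apply (two_of_three f g). Qed.
Lemma w23c {A B E : M} (f : hom A B) (g : hom B E) : weq g -> weq (comp g f) -> weq f.
Proof. apply (two_of_three f g). Qed.

Lemma rlp_trivfib {E F : M} (p : hom E F) :
  (forall (A B : M) (i : hom A B), cof i -> llp i p) -> fib p /\ weq p.
Proof.
  intros Hl.
  set (fa := fact_cof_trivfib M).
  pose proof (ff_fact fa p) as Hfact.
  destruct (Hl _ _ _ (ff_L fa p) (idm E) (ff_r fa p)) as [h [H1 H2]].
  { rewrite comp_id_r; symmetry; exact Hfact. }
  assert (Hr : is_retract p (ff_r fa p)).
  { exists (ff_l fa p), h, (idm F), (idm F).
    split; [exact H1|]. split; [apply comp_id_l|].
    split; [rewrite comp_id_l; exact Hfact|]. rewrite comp_id_l; exact H2. }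
  destruct (ff_R fa p) as [Hf Hw].
  split; [exact (fib_retract Hr Hf) | exact (weq_retract Hr Hw)].
Qed.

Lemma llp_trivcof {A B : M} (i : hom A B) :
  (forall (E F : M) (p : hom E F), fib p -> llp i p) -> cof i /\ weq i.
Proof.
  intros Hl.
  set (fa := fact_trivcof_fib M).
  pose proof (ff_fact fa i) as Hfact.
  destruct (Hl _ _ _ (ff_R fa i) (ff_l fa i) (idm B)) as [h [H1 H2]].
  { rewrite comp_id_l; exact Hfact. }
  assert (Hr : is_retract i (ff_l fa i)).
  { exists (idm A), (idm A), h, (ff_r fa i).
    split; [apply comp_id_l|]. split; [exact H2|].
    split; [rewrite comp_id_r; symmetry; exact H1|]. rewrite comp_id_r; symmetry; exact Hfact. }
  destruct (ff_L fa i) as [Hf Hw].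
  split; [exact (cof_retract Hr Hf) | exact (weq_retract Hr Hw)].
Qed.

Record PB {A B Z : M} (f : hom A Z) (g : hom B Z) := {
  pbO : M; pb1 : hom pbO A; pb2 : hom pbO B;
  pb_comm : comp f pb1 = comp g pb2;
  pb_univ : forall (Q : M) (q1 : hom Q A) (q2 : hom Q B), comp f q1 = comp g q2 ->
      exists! u : hom Q pbO, comp pb1 u = q1 /\ comp pb2 u = q2 }.

Definition pbc {A B Z : M} (f : hom A Z) (g : hom B Z) : PB f g.
Proof.
  destruct (constructive_indefinite_description _ (@mc_pullbacks M _ _ _ f g)) as [P HP].
  destruct (constructive_indefinite_description _ HP) as [p1 HP1].
  destruct (constructive_indefinite_description _ HP1) as [p2 [Hc Hu]].
  exact (Build_PB Hc Hu).
Defined.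

Record PO {Z A B : M} (f : hom Z A) (g : hom Z B) := {
  poO : M; po1 : hom A poO; po2 : hom B poO;
  po_comm : comp po1 f = comp po2 g;
  po_univ : forall (Q : M) (q1 : hom A Q) (q2 : hom B Q), comp q1 f = comp q2 g ->
      exists! u : hom poO Q, comp u po1 = q1 /\ comp u po2 = q2 }.

Definition poc {Z A B : M} (f : hom Z A) (g : hom Z B) : PO f g.
Proof.
  destruct (constructive_indefinite_description _ (@mc_pushouts M _ _ _ f g)) as [P HP].
  destruct (constructive_indefinite_description _ HP) as [p1 HP1].
  destruct (constructive_indefinite_description _ HP1) as [p2 [Hc Hu]].
  exact (Build_PO Hc Hu).
Defined.

Definition pb_med {A B Z : M} {f : hom A Z} {g : hom B Z} (P : PB f g)
  {Q : M} (q1 : hom Q A) (q2 : hom Q B) (H : comp f q1 = comp g q2) : hom Q (pbO P) :=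
  proj1_sig (constructive_indefinite_description _ (pb_univ P H)).

Lemma pb_med_1 {A B Z : M} {f : hom A Z} {g : hom B Z} (P : PB f g)
  {Q : M} (q1 : hom Q A) (q2 : hom Q B) (H : comp f q1 = comp g q2) :
  comp (pb1 P) (pb_med P H) = q1.
Proof. unfold pb_med; destruct constructive_indefinite_description as [u [[H1 H2] Hu]]; exact H1. Qed.
Lemma pb_med_2 {A B Z : M} {f : hom A Z} {g : hom B Z} (P : PB f g)
  {Q : M} (q1 : hom Q A) (q2 : hom Q B) (H : comp f q1 = comp g q2) :
  comp (pb2 P) (pb_med P H) = q2.
Proof. unfold pb_med; destruct constructive_indefinite_description as [u [[H1 H2] Hu]]; exact H2. Qed.

Lemma pb_uniq {A B Z : M} {f : hom A Z} {g : hom B Z} (P : PB f g)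
  {Q : M} (u u' : hom Q (pbO P)) :
  comp (pb1 P) u = comp (pb1 P) u' -> comp (pb2 P) u = comp (pb2 P) u' -> u = u'.
Proof.
  intros H1 H2.
  assert (Hc : comp f (comp (pb1 P) u) = comp g (comp (pb2 P) u)).
  { rewrite !comp_assoc, (pb_comm P); reflexivity. }
  destruct (pb_univ P Hc) as [x [_ Hx]].
  rewrite <- (Hx u (conj eq_refl eq_refl)). apply Hx. split; symmetry; assumption.
Qed.

Definition po_med {Z A B : M} {f : hom Z A} {g : hom Z B} (P : PO f g)
  {Q : M} (q1 : hom A Q) (q2 : hom B Q) (H : comp q1 f = comp q2 g) : hom (poO P) Q :=
  proj1_sig (constructive_indefinite_description _ (po_univ P H)).

Lemma po_med_1 {Z A B : M} {f : hom Z A} {g : hom Z B} (P : PO f g)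
  {Q : M} (q1 : hom A Q) (q2 : hom B Q) (H : comp q1 f = comp q2 g) :
  comp (po_med P H) (po1 P) = q1.
Proof. unfold po_med; destruct constructive_indefinite_description as [u [[H1 H2] Hu]]; exact H1. Qed.
Lemma po_med_2 {Z A B : M} {f : hom Z A} {g : hom Z B} (P : PO f g)
  {Q : M} (q1 : hom A Q) (q2 : hom B Q) (H : comp q1 f = comp q2 g) :
  comp (po_med P H) (po2 P) = q2.
Proof. unfold po_med; destruct constructive_indefinite_description as [u [[H1 H2] Hu]]; exact H2. Qed.

Lemma po_uniq {Z A B : M} {f : hom Z A} {g : hom Z B} (P : PO f g)
  {Q : M} (u u' : hom (poO P) Q) :
  comp u (po1 P) = comp u' (po1 P) -> comp u (po2 P) = comp u' (po2 P) -> u = u'.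
Proof.
  intros H1 H2.
  assert (Hc : comp (comp u (po1 P)) f = comp (comp u (po2 P)) g).
  { rewrite <- !comp_assoc, (po_comm P); reflexivity. }
  destruct (po_univ P Hc) as [x [_ Hx]].
  rewrite <- (Hx u (conj eq_refl eq_refl)). apply Hx. split; symmetry; assumption.
Qed.

Lemma pb_trivfib {A B Z : M} {f : hom A Z} {g : hom B Z} (P : PB f g) :
  fib g -> weq g -> fib (pb1 P) /\ weq (pb1 P).
Proof.
  intros Hf Hw. apply rlp_trivfib. intros S T i Hi u v Huv.
  assert (Hsq : comp g (comp (pb2 P) u) = comp (comp f v) i).
  { rewrite comp_assoc, <- (pb_comm P), <- comp_assoc, Huv, comp_assoc; reflexivity. }
  destruct (lift_cof_trivfib Hi Hf Hw Hsq) as [k [Hk1 Hk2]].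
  assert (Hc : comp f v = comp g k) by (symmetry; exact Hk2).
  exists (pb_med P Hc). split.
  - apply pb_uniq.
    + rewrite comp_assoc, pb_med_1. symmetry; exact Huv.
    + rewrite comp_assoc, pb_med_2. exact Hk1.
  - apply pb_med_1.
Qed.

Lemma po_trivcof {Z A B : M} {f : hom Z A} {g : hom Z B} (P : PO f g) :
  cof f -> weq f -> cof (po2 P) /\ weq (po2 P).
Proof.
  intros Hf Hw. apply llp_trivcof. intros E F p Hp u v Huv.
  assert (Hsq : comp p (comp u g) = comp (comp v (po1 P)) f).
  { rewrite <- !comp_assoc, (po_comm P), comp_assoc, Huv, comp_assoc; reflexivity. }
  destruct (lift_trivcof_fib Hf Hw Hp Hsq) as [k [Hk1 Hk2]].
  exists (po_med P Hk1). split.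
  - apply po_med_2.
  - apply po_uniq.
    + rewrite <- comp_assoc, po_med_1. exact Hk2.
    + rewrite <- comp_assoc, po_med_2. exact Huv.
Qed.


Variables X Y : M.
Definition fa := fact_cof_trivfib M.
Definition fb := fact_trivcof_fib M.
Notation ZZc := (ZZcat X Y).

Lemma ff_map_irr {L R : MorClass M} (F : FunctorialFactorization L R)
  {A B A' B' : M} (f : hom A B) (f' : hom A' B') (u u' : hom A A') (v v' : hom B B')
  (H : comp f' u = comp v f) (H' : comp f' u' = comp v' f) :
  u = u' -> v = v' -> ff_map F H = ff_map F H'.
Proof. intros -> ->. f_equal. apply proof_irrelevance. Qed.

Lemma ff_map_comp' {L R : MorClass M} (F : FunctorialFactorization L R)
  {A B A' B' A'' B'' : M} (f : hom A B) (f' : hom A' B') (f'' : hom A'' B'')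
  (u : hom A A') (v : hom B B') (u' : hom A' A'') (v' : hom B' B'') u'' v''
  (H1 : comp f' u = comp v f) (H2 : comp f'' u' = comp v' f')
  (H12 : comp f'' u'' = comp v'' f) :
  u'' = comp u' u -> v'' = comp v' v ->
  ff_map F H12 = comp (ff_map F H2) (ff_map F H1).
Proof.
  intros -> ->. apply (ff_map_comp F).
Qed.

Definition F1U (z : ZZ X Y) : M := ff_ob fa (zw z).
Definition F1l (z : ZZ X Y) : hom (zU z) (F1U z) := ff_l fa (zw z).
Definition F1w (z : ZZ X Y) : hom (F1U z) X := ff_r fa (zw z).
Definition F1P (z : ZZ X Y) : PO (F1l z) (zf z) := poc _ _.

Lemma eta1_w (z : ZZ X Y) : comp (F1w z) (F1l z) = zw z.
Proof. apply (ff_fact fa). Qed.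
Lemma F1w_tf z : fib (F1w z) /\ weq (F1w z).
Proof. exact (ff_R fa (zw z)). Qed.
Lemma F1l_tc z : cof (F1l z) /\ weq (F1l z).
Proof.
  split; [exact (ff_L fa (zw z))|].
  apply (w23c (f:=F1l z) (g:=F1w z)); [apply F1w_tf|]. rewrite eta1_w. apply zw_weq.
Qed.
Lemma F1po2_tc z : cof (po2 (F1P z)) /\ weq (po2 (F1P z)).
Proof. apply po_trivcof; apply F1l_tc. Qed.
Lemma F1g_weq z : weq (comp (po2 (F1P z)) (zg z)).
Proof. apply w23a; [apply zg_weq | apply F1po2_tc]. Qed.

Definition F1obj (z : ZZ X Y) : ZZ X Y :=
  @Build_ZZ M X Y (F1U z) (poO (F1P z)) (F1w z) (po1 (F1P z))
    (comp (po2 (F1P z)) (zg z)) (proj2 (F1w_tf z)) (F1g_weq z).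

Lemma F1HU {z z' : ZZ X Y} (h : ZZhom z z') : comp (zw z') (za h) = comp (idm X) (zw z).
Proof. rewrite comp_id_l; apply zh_w. Qed.
Definition F1mU {z z' : ZZ X Y} (h : ZZhom z z') : hom (F1U z) (F1U z') := ff_map fa (F1HU h).
Lemma F1mU_l {z z' : ZZ X Y} (h : ZZhom z z') : comp (F1mU h) (F1l z) = comp (F1l z') (za h).
Proof. apply (ff_map_l fa). Qed.
Lemma F1mU_r {z z' : ZZ X Y} (h : ZZhom z z') : comp (F1w z') (F1mU h) = F1w z.
Proof. unfold F1mU, F1w. etransitivity; [apply (ff_map_r fa)|]. apply comp_id_l. Qed.
Lemma F1HV {z z' : ZZ X Y} (h : ZZhom z z') :
  comp (comp (po1 (F1P z')) (F1mU h)) (F1l z) = comp (comp (po2 (F1P z')) (zb h)) (zf z).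
Proof.
  rewrite <- !comp_assoc, F1mU_l, <- (zh_f h), !comp_assoc, (po_comm (F1P z')). reflexivity.
Qed.
Definition F1mV {z z' : ZZ X Y} (h : ZZhom z z') : hom (poO (F1P z)) (poO (F1P z')) :=
  po_med (F1P z) (F1HV h).

Lemma F1mU_weq {z z' : ZZ X Y} (h : ZZhom z z') : weq (F1mU h).
Proof. apply (w23c (g:=F1w z')); [apply F1w_tf|]. rewrite F1mU_r; apply F1w_tf. Qed.
Lemma F1mV_weq {z z' : ZZ X Y} (h : ZZhom z z') : weq (F1mV h).
Proof.
  apply (w23b (f:=po2 (F1P z))); [apply F1po2_tc|].
  unfold F1mV; rewrite po_med_2. apply w23a; [apply zb_weq | apply F1po2_tc].
Qed.
Lemma F1m_f {z z' : ZZ X Y} (h : ZZhom z z') :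
  comp (po1 (F1P z')) (F1mU h) = comp (F1mV h) (po1 (F1P z)).
Proof. unfold F1mV; rewrite po_med_1; reflexivity. Qed.
Lemma F1m_g {z z' : ZZ X Y} (h : ZZhom z z') :
  comp (F1mV h) (comp (po2 (F1P z)) (zg z)) = comp (po2 (F1P z')) (zg z').
Proof. unfold F1mV; rewrite comp_assoc, po_med_2, <- comp_assoc, (zh_g h); reflexivity. Qed.

Definition F1hom {z z' : ZZ X Y} (h : ZZhom z z') : ZZhom (F1obj z) (F1obj z') :=
  @Build_ZZhom M X Y (F1obj z) (F1obj z') (F1mU h) (F1mV h) (F1mU_weq h) (F1mV_weq h)
    (F1mU_r h) (F1m_f h) (F1m_g h).

Lemma F1_id (z : ZZc) : F1hom (@idm ZZc z) = @idm ZZc (F1obj z).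
Proof.
  apply ZZhom_eq; simpl.
  - unfold F1mU. apply (ff_map_id fa).
  - apply po_uniq.
    + rewrite <- F1m_f. simpl. unfold F1mU. rewrite (ff_map_id fa), comp_id_r, comp_id_l. reflexivity.
    + unfold F1mV. rewrite po_med_2, comp_id_r, comp_id_l. reflexivity.
Qed.

Lemma F1_comp (z1 z2 z3 : ZZc) (g : hom z2 z3) (f : hom z1 z2) :
  F1hom (@comp ZZc _ _ _ g f) = @comp ZZc _ _ _ (F1hom g) (F1hom f).
Proof.
  apply ZZhom_eq; simpl.
  - unfold F1mU. apply (ff_map_comp' fa); [reflexivity| symmetry; apply comp_id_l].
  - apply po_uniq.
    + transitivity (comp (po1 (F1P z3)) (comp (F1mU g) (F1mU f))).
      * rewrite <- F1m_f. f_equal. unfold F1mU. apply (ff_map_comp' fa); [reflexivity| symmetry; apply comp_id_l].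
      * rewrite comp_assoc, F1m_f, <- comp_assoc, F1m_f, comp_assoc. reflexivity.
    + unfold F1mV at 1. rewrite po_med_2, <- comp_assoc. unfold F1mV at 2. rewrite po_med_2.
      rewrite comp_assoc. unfold F1mV. rewrite po_med_2, <- comp_assoc. reflexivity.
Qed.

Definition F1 : Functor ZZc ZZc :=
  @Build_Functor ZZc ZZc F1obj (fun z z' h => F1hom h) F1_id F1_comp.

Definition eta1c (z : ZZ X Y) : ZZhom z (F1obj z) :=
  @Build_ZZhom M X Y z (F1obj z) (F1l z) (po2 (F1P z)) (proj2 (F1l_tc z)) (proj2 (F1po2_tc z))
    (eta1_w z) (po_comm (F1P z)) eq_refl.

Lemma eta1_nat (z z' : ZZc) (h : hom z z') :
  @comp ZZc _ _ _ (eta1c z') (fmap (id_functor ZZc) h) = @comp ZZc _ _ _ (fmap F1 h) (eta1c z).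
Proof.
  apply ZZhom_eq; simpl.
  - symmetry; apply F1mU_l.
  - unfold F1mV; rewrite po_med_2; reflexivity.
Qed.

Definition eta1 : NatTrans (id_functor ZZc) F1 := @Build_NatTrans ZZc ZZc (id_functor ZZc) F1 eta1c eta1_nat.


Definition F2V (z : ZZ X Y) : M := ff_ob fb (zg z).
Definition F2k (z : ZZ X Y) : hom Y (F2V z) := ff_l fb (zg z).
Definition F2q (z : ZZ X Y) : hom (F2V z) (zV z) := ff_r fb (zg z).
Definition F2P (z : ZZ X Y) : PB (zf z) (F2q z) := pbc _ _.

Lemma eps2_g (z : ZZ X Y) : comp (F2q z) (F2k z) = zg z.
Proof. apply (ff_fact fb). Qed.
Lemma F2k_tc z : cof (F2k z) /\ weq (F2k z).
Proof. exact (ff_L fb (zg z)). Qed.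
Lemma F2q_tf z : fib (F2q z) /\ weq (F2q z).
Proof.
  split; [exact (ff_R fb (zg z))|].
  apply (w23b (f:=F2k z)); [apply F2k_tc|]. rewrite eps2_g. apply zg_weq.
Qed.
Lemma F2p1_tf z : fib (pb1 (F2P z)) /\ weq (pb1 (F2P z)).
Proof. apply pb_trivfib; apply F2q_tf. Qed.
Lemma F2w_weq z : weq (comp (zw z) (pb1 (F2P z))).
Proof. apply w23a; [apply F2p1_tf | apply zw_weq]. Qed.

Definition F2obj (z : ZZ X Y) : ZZ X Y :=
  @Build_ZZ M X Y (pbO (F2P z)) (F2V z) (comp (zw z) (pb1 (F2P z))) (pb2 (F2P z))
    (F2k z) (F2w_weq z) (proj2 (F2k_tc z)).

Lemma F2HV {z z' : ZZ X Y} (h : ZZhom z z') : comp (zg z') (idm Y) = comp (zb h) (zg z).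
Proof. rewrite comp_id_r; symmetry; apply zh_g. Qed.
Definition F2mV {z z' : ZZ X Y} (h : ZZhom z z') : hom (F2V z) (F2V z') := ff_map fb (F2HV h).
Lemma F2mV_l {z z' : ZZ X Y} (h : ZZhom z z') : comp (F2mV h) (F2k z) = F2k z'.
Proof. unfold F2mV, F2k. etransitivity; [apply (ff_map_l fb)|]. apply comp_id_r. Qed.
Lemma F2mV_r {z z' : ZZ X Y} (h : ZZhom z z') : comp (F2q z') (F2mV h) = comp (zb h) (F2q z).
Proof. apply (ff_map_r fb). Qed.
Lemma F2HU {z z' : ZZ X Y} (h : ZZhom z z') :
  comp (zf z') (comp (za h) (pb1 (F2P z))) = comp (F2q z') (comp (F2mV h) (pb2 (F2P z))).
Proof.
  rewrite comp_assoc, (zh_f h), <- comp_assoc, (pb_comm (F2P z)), comp_assoc, <- F2mV_r.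
  apply eq_sym, comp_assoc.
Qed.
Definition F2mU {z z' : ZZ X Y} (h : ZZhom z z') : hom (pbO (F2P z)) (pbO (F2P z')) :=
  pb_med (F2P z') (F2HU h).
Lemma F2mU_1 {z z' : ZZ X Y} (h : ZZhom z z') :
  comp (pb1 (F2P z')) (F2mU h) = comp (za h) (pb1 (F2P z)).
Proof. apply pb_med_1. Qed.
Lemma F2mU_2 {z z' : ZZ X Y} (h : ZZhom z z') :
  comp (pb2 (F2P z')) (F2mU h) = comp (F2mV h) (pb2 (F2P z)).
Proof. apply pb_med_2. Qed.
Lemma F2mV_weq {z z' : ZZ X Y} (h : ZZhom z z') : weq (F2mV h).
Proof.
  apply (w23c (g:=F2q z')); [apply F2q_tf|]. rewrite F2mV_r. apply w23a; [apply F2q_tf|apply zb_weq].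
Qed.
Lemma F2mU_weq {z z' : ZZ X Y} (h : ZZhom z z') : weq (F2mU h).
Proof.
  apply (w23c (g:=pb1 (F2P z'))); [apply F2p1_tf|]. rewrite F2mU_1. apply w23a; [apply F2p1_tf|apply za_weq].
Qed.
Lemma F2m_w {z z' : ZZ X Y} (h : ZZhom z z') :
  comp (comp (zw z') (pb1 (F2P z'))) (F2mU h) = comp (zw z) (pb1 (F2P z)).
Proof. rewrite <- comp_assoc, F2mU_1, comp_assoc, (zh_w h). reflexivity. Qed.

Definition F2hom {z z' : ZZ X Y} (h : ZZhom z z') : ZZhom (F2obj z) (F2obj z') :=
  @Build_ZZhom M X Y (F2obj z) (F2obj z') (F2mU h) (F2mV h) (F2mU_weq h) (F2mV_weq h)
    (F2m_w h) (F2mU_2 h) (F2mV_l h).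

Lemma F2_id (z : ZZc) : F2hom (@idm ZZc z) = @idm ZZc (F2obj z).
Proof.
  assert (HV : F2mV (@ZZid M X Y z) = idm (F2V z)) by (unfold F2mV; apply (ff_map_id fb)).
  apply ZZhom_eq; simpl.
  - apply pb_uniq.
    + rewrite F2mU_1, comp_id_r. apply comp_id_l.
    + rewrite F2mU_2, comp_id_r, HV. apply comp_id_l.
  - exact HV.
Qed.

Lemma F2_comp (z1 z2 z3 : ZZc) (g : hom z2 z3) (f : hom z1 z2) :
  F2hom (@comp ZZc _ _ _ g f) = @comp ZZc _ _ _ (F2hom g) (F2hom f).
Proof.
  assert (HV : F2mV (@ZZcomp M X Y _ _ _ g f) = comp (F2mV g) (F2mV f)).
  { unfold F2mV. apply (ff_map_comp' fb); [symmetry; apply comp_id_l | reflexivity]. }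
  apply ZZhom_eq; simpl.
  - apply pb_uniq.
    + rewrite F2mU_1, comp_assoc, F2mU_1, <- comp_assoc, F2mU_1, comp_assoc. reflexivity.
    + rewrite F2mU_2, comp_assoc, F2mU_2, <- comp_assoc, F2mU_2, comp_assoc, HV. reflexivity.
  - exact HV.
Qed.

Definition F2 : Functor ZZc ZZc :=
  @Build_Functor ZZc ZZc F2obj (fun z z' h => F2hom h) F2_id F2_comp.

Definition eps2c (z : ZZ X Y) : ZZhom (F2obj z) z :=
  @Build_ZZhom M X Y (F2obj z) z (pb1 (F2P z)) (F2q z) (proj2 (F2p1_tf z)) (proj2 (F2q_tf z))
    eq_refl (pb_comm (F2P z)) (eps2_g z).

Lemma eps2_nat (z z' : ZZc) (h : hom z z') :
  @comp ZZc _ _ _ (eps2c z') (fmap F2 h) = @comp ZZc _ _ _ (fmap (id_functor ZZc) h) (eps2c z).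
Proof.
  apply ZZhom_eq; simpl.
  - apply F2mU_1.
  - apply F2mV_r.
Qed.

Definition eps2 : NatTrans F2 (id_functor ZZc) :=
  @Build_NatTrans ZZc ZZc F2 (id_functor ZZc) eps2c eps2_nat.


Definition Pw (z : ZZc) : Prop := @ZZ_WW M X Y z.

Lemma F1_pres (z : ZZc) : Pw z -> Pw (F1obj z).
Proof.
  intros [_ [Hc _]]. split; [apply F1w_tf|]. split.
  - apply (proj2 (cof_subcat M)); [exact Hc | apply F1po2_tc].
  - apply F1g_weq.
Qed.
Lemma F2_pres (z : ZZc) : fib (zw z) /\ weq (zw z) -> Pw (F2obj z).
Proof.
  intros [Hf _]. split; [split|].
  - apply (proj2 (fib_subcat M)); [apply F2p1_tf | exact Hf].
  - apply F2w_weq.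
  - apply F2k_tc.
Qed.
Lemma G_P (z : ZZc) : Pw (F2obj (F1obj z)).
Proof. apply F2_pres. apply F1w_tf. Qed.

Definition Gobj (z : ZZc) : FullSub Pw := exist _ (F2obj (F1obj z)) (G_P z).
Definition Gmap (z z' : ZZc) (h : hom z z') : @hom (FullSub Pw) (Gobj z) (Gobj z') :=
  F2hom (F1hom h).
Lemma G_id (z : ZZc) : Gmap (@idm ZZc z) = @idm (FullSub Pw) (Gobj z).
Proof.
  unfold Gmap. transitivity (F2hom (@idm ZZc (F1obj z))); [f_equal; apply F1_id | apply F2_id].
Qed.
Lemma G_comp (z1 z2 z3 : ZZc) (g : hom z2 z3) (f : hom z1 z2) :
  Gmap (@comp ZZc _ _ _ g f) = @comp (FullSub Pw) _ _ _ (Gmap g) (Gmap f).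
Proof.
  unfold Gmap. transitivity (F2hom (@comp ZZc _ _ _ (F1hom g) (F1hom f))); [f_equal; apply F1_comp | apply F2_comp].
Qed.
Definition G : Functor ZZc (FullSub Pw) := @Build_Functor ZZc (FullSub Pw) Gobj Gmap G_id G_comp.

Definition F1robj (a : FullSub Pw) : FullSub Pw :=
  exist _ (F1obj (proj1_sig a)) (F1_pres (proj2_sig a)).
Definition F1rmap (a b : FullSub Pw) (h : hom a b) : @hom (FullSub Pw) (F1robj a) (F1robj b) :=
  F1hom h.
Lemma F1r_id (a : FullSub Pw) : F1rmap (@idm (FullSub Pw) a) = @idm (FullSub Pw) (F1robj a).
Proof. apply F1_id. Qed.
Lemma F1r_comp (a b c : FullSub Pw) (g : hom b c) (f : hom a b) :
  F1rmap (@comp (FullSub Pw) _ _ _ g f) = @comp (FullSub Pw) _ _ _ (F1rmap g) (F1rmap f).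
Proof. apply F1_comp. Qed.
Definition F1r : Functor (FullSub Pw) (FullSub Pw) :=
  @Build_Functor (FullSub Pw) (FullSub Pw) F1robj F1rmap F1r_id F1r_comp.

Definition NT1 : NatTrans (comp_functor (incl Pw) G) F1 :=
  @Build_NatTrans ZZc ZZc (comp_functor (incl Pw) G) F1 (fun z => eps2c (F1obj z))
    (fun z z' h => eps2_nat (F1hom h)).

Definition NT2 : NatTrans (comp_functor G (incl Pw)) F1r :=
  @Build_NatTrans (FullSub Pw) (FullSub Pw) (comp_functor G (incl Pw)) F1r
    (fun a => eps2c (F1obj (proj1_sig a)))
    (fun a b h => eps2_nat (F1hom h)).

Definition NT3 : NatTrans (id_functor (FullSub Pw)) F1r :=
  @Build_NatTrans (FullSub Pw) (FullSub Pw) (id_functor (FullSub Pw)) F1r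
    (fun a => eta1c (proj1_sig a))
    (fun a b h => eta1_nat h).

Lemma main : homotopy_equivalence (incl Pw).
Proof.
  exists G. split.
  - eapply nzz_fwd; [exact NT1|]. eapply nzz_bwd; [exact eta1|]. apply nzz_refl.
  - eapply nzz_fwd; [exact NT2|]. eapply nzz_bwd; [exact NT3|]. apply nzz_refl.
Qed.

End S.

Theorem proposition2p1 (M : ModelCategory) (X Y : M) :
  homotopy_equivalence (incl (@ZZ_WW M X Y)).
Proof. exact (main X Y). Qed.
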